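(* Let $\mathbb{F}$ be a finite field of size $q$ and $s,d,t$ positive integers with $s-dt>0$. For every positive integer $j$ with $$ j\ \ge\ \begin{cases}\log_q(s-1) & \text{if } q^j \text{ is odd, or } (s-dt)\notin\{3,q^j-1\},\\ \log_q(s-2) & \text{if } q^j \text{ is even and } (s-dt)\in\{3,q^j-1\},\end{cases}$$ there is an explicit block totally nonsingular array $\mathbf{A}\in\mathrm{GL}(\mathbb{F},j)^{(s-dt)\times dt}$.
   Context: $\mathrm{GL}(\mathbb{F},j)$ is the set of invertible $j\times j$ matrices over $\mathbb{F}$. An $r\times u$ block array $\mathbf{A}=[A_{i,k}]$ with each $A_{i,k}\in\mathrm{GL}(\mathbb{F},j)$ is block totally nonsingular if for all $S\subseteq[r]$, $S'\subseteq[u]$ with $|S|=|S'|$, the $j|S|\times j|S'|$ matrix $[A_{i,k}]_{i\in S,k\in S'}$ is nonsingular. *)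

(* Defs.v *)
From HB Require Import structures.
From mathcomp Require Import all_boot all_order all_algebra.
Set Implicit Arguments. Unset Strict Implicit. Unset Printing Implicit Defensive.
Import GRing.Theory.
Local Open Scope ring_scope.

Definition block_array (F : fieldType) (r u j : nat) := 'I_r -> 'I_u -> 'M[F]_j.

Definition blocks_in_GL (F : fieldType) (r u j : nat) (A : block_array F r u j) : Prop :=
  forall i k, A i k \in unitmx.

(* The (j|S|) x (j|S'|) matrix [A_{i,k}]_{i in S, k in S'}; rows/columns of
   blocks are taken in increasing order of the indices in S, S'.  Row index
   of the big matrix is a pair (block row a, inner row b). *)
Definition block_sub (F : fieldType) (r u j : nat) (A : block_array F r u j)
  (S : {set 'I_r}) (S' : {set 'I_u}) : 'M[F]_(#|S| * j, #|S'| * j) :=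
  \matrix_(x < #|S| * j, y < #|S'| * j)
    let p := enum_val (cast_ord (esym (mxvec_cast #|S| j)) x) in
    let q := enum_val (cast_ord (esym (mxvec_cast #|S'| j)) y) in
    A (enum_val p.1) (enum_val q.1) p.2 q.2.

Definition block_totally_nonsingular (F : fieldType) (r u j : nat)
  (A : block_array F r u j) : Prop :=
  forall (S : {set 'I_r}) (S' : {set 'I_u}) (h : #|S'| = #|S|),
    castmx (erefl, congr1 (muln^~ j) h) (block_sub A S S') \in unitmx.

(* Main.v *)
From HB Require Import structures.
From mathcomp Require Import all_boot all_order all_algebra all_field zify ring.
Require Import Defs.
Set Implicit Arguments. Unset Strict Implicit. Unset Printing Implicit Defensive.
Import GRing.Theory.
Local Open Scope ring_scope.
Lemma unit_of_ker (F : fieldType) n (M : 'M[F]_n) :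
  (forall v : 'rV_n, v *m M = 0 -> v = 0) -> M \in unitmx.
Proof.
move=> H; rewrite -row_free_unit -kermx_eq0; apply/eqP/row_matrixP => i.
rewrite row0; apply: H; rewrite -row_mul.
by have /sub_kermxP -> := submx_refl (kermx M); rewrite row0.
Qed.

Definition SR (K : fieldType) r u (a : 'I_r -> 'I_u -> K) :=
  forall n (f : 'I_n -> 'I_r) (g : 'I_n -> 'I_u), injective f -> injective g ->
    (\matrix_(x, y) a (f x) (g y)) \in unitmx.

Lemma SR_of_ker (K : fieldType) r u (a : 'I_r -> 'I_u -> K) :
  (forall n (f : 'I_n -> 'I_r) (g : 'I_n -> 'I_u), injective f -> injective g ->
    forall v : 'I_n -> K, (forall y, \sum_x v x * a (f x) (g y) = 0) -> forall x, v x = 0) ->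
  SR a.
Proof.
move=> H n f g injf injg; apply: unit_of_ker => v hv; apply/rowP => x.
rewrite mxE; apply: (H n f g injf injg (fun x => v 0 x)) => y.
by have /rowP /(_ y) := hv; rewrite !mxE => e; apply: etrans e; apply: eq_bigr => z _; rewrite mxE.
Qed.

Lemma SR_nz (K : fieldType) r u (a : 'I_r -> 'I_u -> K) i k : SR a -> a i k != 0.
Proof.
move=> /(_ 1 (fun _ => i) (fun _ => k)).
have inj1 (T : Type) (h : 'I_1 -> T) : injective h by move=> x y _; rewrite !ord1.
move=> /(_ (inj1 _ _) (inj1 _ _)); rewrite unitmxE det_mx11 mxE unitfE //.
Qed.

Lemma SR_tr (K : fieldType) r u (a : 'I_r -> 'I_u -> K) :
  SR a -> SR (fun k i => a i k).
Proof.
move=> H n f g injf injg; rewrite -unitmx_tr.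
have -> : (\matrix_(x, y) a (g y) (f x))^T = \matrix_(x, y) a (g x) (f y).
  by apply/matrixP => x y; rewrite !mxE.
exact: H.
Qed.

Lemma SR_restr (K : fieldType) r u r' u' (a : 'I_r -> 'I_u -> K)
  (h1 : 'I_r' -> 'I_r) (h2 : 'I_u' -> 'I_u) : injective h1 -> injective h2 ->
  SR a -> SR (fun i k => a (h1 i) (h2 k)).
Proof.
move=> i1 i2 H n f g injf injg.
exact: (H n (h1 \o f) (h2 \o g) (inj_comp i1 injf) (inj_comp i2 injg)).
Qed.

Lemma poly_zero_of_roots (K : fieldType) n (P : {poly K}) (c : 'I_n -> K) :
  injective c -> (size P <= n)%N -> (forall y, P.[c y] = 0) -> P = 0.
Proof.
move=> injc szP hP; apply: (@roots_geq_poly_eq0 _ _ [seq c y | y <- enum 'I_n]).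
- by apply/allP => z /mapP[y _ ->]; rewrite /root hP.
- by rewrite map_inj_uniq ?enum_uniq.
- by rewrite size_map size_enum_ord.
Qed.

Lemma SR_gen (K : finFieldType) r u : (0 < r)%N -> (0 < u)%N ->
  (r + u <= #|K| + 1)%N -> exists a : 'I_r -> 'I_u -> K, SR a.
Proof.
move=> r_gt0 u_gt0 hru.
pose es := enum K.
have ues : uniq es by apply: enum_uniq.
have ses : size es = #|K| by rewrite cardE.
pose pt (i : 'I_r) := nth 0 es i.-1.
pose cpt (k : 'I_u) := nth 0 es (r.-1 + k).
pose a (i : 'I_r) (k : 'I_u) := if (i : nat) == 0%N then 1 else (cpt k - pt i)^-1.
have cpt_inj : injective cpt.
  move=> k k' /eqP; rewrite /cpt nth_uniq ?ses //.
  1: by move=> /eqP e; apply: ord_inj; lia.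
  1-2: have := ltn_ord k; have := ltn_ord k'; lia.
have pt_inj (i i' : 'I_r) : (i : nat) != 0%N -> (i' : nat) != 0%N -> pt i = pt i' -> i = i'.
  move=> hi hi' /eqP; rewrite /pt nth_uniq ?ses //.
  1: by move=> /eqP e; apply: ord_inj; lia.
  1-2: have := ltn_ord i; have := ltn_ord i'; lia.
have pt_cpt (i : 'I_r) (k : 'I_u) : (i : nat) != 0%N -> cpt k != pt i.
  move=> hi; rewrite /pt /cpt nth_uniq ?ses //.
  1-3: have := ltn_ord i; have := ltn_ord k; lia.
exists a; apply: SR_of_ker => n f g injf injg v hv.
pose fin x := (f x : nat) != 0%N.
pose Pi x := \prod_(x' | (x' != x) && fin x') ('X - (pt (f x'))%:P).
pose D c := \prod_(x' | fin x') (c - pt (f x')).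
pose P := \sum_x v x *: Pi x.
have F1 y x : (Pi x).[cpt (g y)] = D (cpt (g y)) * a (f x) (g y).
  rewrite /Pi /D /a horner_prod; case: ifP => hx.
    rewrite mulr1; apply: eq_big => [x'|x' _]; last by rewrite hornerXsubC.
    rewrite andb_idl // => hx'.
    by apply: contraNneq hx' => ->; rewrite /fin hx.
  rewrite [in RHS](bigD1 x) /fin ?hx //= mulrAC mulfV ?mul1r; last first.
    by rewrite subr_eq0 pt_cpt ?hx.
  by apply: eq_big => [x'|x' _]; rewrite ?hornerXsubC // andbC.
have szPi x : (size (Pi x) <= n)%N.
  rewrite /Pi -big_filter size_prod_XsubC.
  have -> : size [seq x' <- index_enum 'I_n | (x' != x) && fin x'] =
      #|[pred x' | (x' != x) && fin x']| by rewrite cardE /enum_mem size_filter.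
  have : (#|[pred x' | (x' != x) && fin x']| <= #|predC1 x|)%N.
    by apply: subset_leq_card; apply/subsetP => x' /andP[].
  rewrite cardC1 card_ord; have := ltn_ord x; lia.
have P0 : P = 0.
  apply: (@poly_zero_of_roots _ n _ (cpt \o g)); first exact: inj_comp.
  - rewrite /P; apply: (big_ind (fun p : {poly K} => size p <= n)%N) => //.
    + by rewrite size_poly0.
    + by move=> p q hp hq; apply: leq_trans (size_polyD _ _) _; rewrite geq_max hp.
    + by move=> x _; apply: leq_trans (size_scale_leq _ _) _.
  - move=> y; rewrite /P horner_sum /=.
    under eq_bigr => x _ do rewrite hornerZ F1 mulrCA.
    by rewrite -mulr_sumr hv mulr0.
have F4 x0 : fin x0 -> v x0 = 0.
  move=> hx0; have := congr1 (horner^~ (pt (f x0))) P0.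
  rewrite horner0 /P horner_sum (bigD1 x0) //= big1 ?addr0.
    rewrite hornerZ => /eqP; rewrite mulf_eq0 => /orP[/eqP //|].
    rewrite /Pi horner_prod => /eqP/eqP/prodf_neq0 => H; exfalso; apply: H.
    move=> x' /andP[hx' hfx']; rewrite hornerXsubC subr_eq0.
    by apply/eqP => /pt_inj e; move: hx'; rewrite (injf _ _ (e hx0 hfx')) eqxx.
  move=> x hx; rewrite hornerZ /Pi horner_prod (bigD1 x0) /=.
    by rewrite hornerXsubC subrr mul0r mulr0.
  by rewrite eq_sym hx.
move=> x0; case hx0 : (fin x0); first exact: F4.
have := hv x0; rewrite (bigD1 x0) //= big1 ?addr0.
  by rewrite /a; move: hx0; rewrite /fin => /negbFE ->; rewrite mulr1.
move=> x hx; rewrite F4 ?mul0r //; apply: contra_neqT hx => /negbNE hfx.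
apply: injf; apply: val_inj => /=; move: hx0; rewrite /fin (eqP hfx) => /negbFE/eqP -> //.
Qed.

Lemma block_TN (F K : fieldType) r u j (A : block_array F r u j)
  (a : 'I_r -> 'I_u -> K) (psi : 'rV[F]_j -> K)
  (psiD : {morph psi : x y / x + y}) (psi0 : psi 0 = 0)
  (psi_inj : forall w, psi w = 0 -> w = 0)
  (hA : forall i k w, psi (w *m A i k) = psi w * a i k) :
  SR a -> block_totally_nonsingular A.
Proof.
move=> hSR S S' h; apply: unit_of_ker => v hv.
set m := #|S|.
have hv2 : forall y, \sum_x v 0 x * block_sub A S S' x y = 0.
  move=> y; have := congr1 (fun M : 'rV[F]_(#|S| * j) => M 0 (cast_ord (congr1 (muln^~ j) h) y)) hv.
  rewrite !mxE => e; apply: etrans e; apply: eq_bigr => x _; rewrite castmxE /=. 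
by rewrite cast_ord_id cast_ordK.
pose w (x : 'I_m) := \row_b v 0 (mxvec_index x b).
pose f (x : 'I_m) : 'I_r := enum_val x.
pose g (x : 'I_m) : 'I_u := enum_val (cast_ord (esym h) x).
have hw : forall c : 'I_m, \sum_x psi (w x) * a (f x) (g c) = 0.
  move=> c; under eq_bigr => x _ do rewrite -hA.
  rewrite -(big_morph psi psiD psi0) -psi0; congr psi.
  apply/rowP => d; rewrite mxE summxE.
  have := hv2 (mxvec_index (cast_ord (esym h) c) d).
  rewrite (reindex (uncurry (@mxvec_index m j))) /=; last exact: curry_mxvec_bij.
  move=> e; apply: etrans e; under eq_bigr => x _ do rewrite mxE.
  rewrite pair_big /=; apply: eq_bigr => [[x b]] _ /=.
  by rewrite !mxE !cast_ordK !enum_rankK /=.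
have injf : injective f by apply: enum_val_inj.
have injg : injective g by move=> x y /enum_val_inj /cast_ord_inj.
have hN := hSR m f g injf injg.
pose z := \row_x psi (w x).
have hz : z *m (\matrix_(x, y) a (f x) (g y)) = 0.
  apply/rowP => c; rewrite !mxE; apply: etrans (hw c); by apply: eq_bigr => x _; rewrite !mxE.
have z0 : z = 0 by rewrite -(mulmxK hN z) hz mul0mx.
apply/rowP => k; case/mxvec_indexP: k => x b.
have /psi_inj /rowP /(_ b) : psi (w x) = 0.
  by have /rowP /(_ x) := z0; rewrite !mxE.
by rewrite !mxE.
Qed.

Lemma ext_card (F : finFieldType) (k : nat) : (0 < k)%N ->
  {L : splittingFieldType F | #|FinFieldExtType L| = (#|F| ^ k)%N}.
Proof.
move=> k_gt0; set m := (#|F| ^ k)%N.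
have F_gt1 : (1 < #|F|)%N by apply: finNzRing_gt1.
have m_gt1: (m > 1)%N by rewrite (ltn_exp2l 0).
have m_gt0 := ltnW m_gt1; have m1_gt0: (m.-1 > 0)%N by rewrite -ltnS prednK.
pose q (R : nzRingType) : {poly R} := 'X^m - 'X.
have Dq R: q R = ('X^(m.-1) - 1) * ('X - 0).
  by rewrite subr0 mulrBl mul1r -exprSr prednK.
have /FinSplittingFieldFor[/= L splitLq]: q F != 0.
  by rewrite Dq monic_neq0 ?rpredM ?monicXsubC ?monicXnsubC.
rewrite [map_poly _ _]rmorphB rmorphXn /= map_polyX -/(q L) in splitLq.
exists L.
pose Fm := FinFieldExtType L.
have [p pr_p pcharFp] := finPcharP F.
have pcharL: p \in [pchar L] by rewrite pchar_lalg.
have /finField_galois_generator[/= a _ Da]: (1 <= {:L})%VS by apply: sub1v.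
pose Em := fixedSpace (a ^+ k)%g; rewrite dimv1 expn1 in Da.
have{splitLq} [zs DqL defL] := splitLq.
have Uzs: uniq zs.
  rewrite -separable_prod_XsubC -(eqp_separable DqL) Dq separable_root andbC.
  rewrite /root !hornerE subr_eq0 eq_sym expr0n gtn_eqF ?oner_eq0 //=.
  rewrite cyclotomic.separable_Xn_sub_1 // -subn1 natrB // subr_eq0.
  rewrite natrX.
  have cardF := card_pprimeChar pcharFp; move: cardF F_gt1.
  case: (logn _ _) => [|n] -> //= _.
  by rewrite natrX (pcharf0 pcharL) expr0n /= expr0n gtn_eqF // eq_sym oner_eq0.
suffices /eq_card->: Fm =i zs.
  apply: succn_inj; rewrite (card_uniqP _) //= -(size_prod_XsubC _ id).
  by rewrite -(eqp_size DqL) size_polyDl size_polyXn // size_polyN size_polyX.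
have in_zs: zs =i Em.
  move=> z; rewrite -root_prod_XsubC -(eqp_root DqL) (sameP fixedSpaceP eqP).
  rewrite /root !hornerE subr_eq0 /= /m; congr (_ == z).
  elim: (k) => [|i IHi]; first by rewrite gal_id.
  by rewrite expgSr expnSr exprM IHi galM ?Da ?memvf.
suffices defEm: Em = {:L}%VS by move=> z; rewrite in_zs defEm memvf.
apply/eqP; rewrite eqEsubv subvf -defL -[Em]subfield_closed agenvS //.
by rewrite subv_add sub1v; apply/span_subvP=> z; rewrite in_zs.
Qed.

Lemma ext_field (F : finFieldType) k : (0 < k)%N ->
  exists (K : finFieldType) (psi : 'rV[F]_k -> K) (M : K -> 'M[F]_k),
  [/\ #|K| = (#|F| ^ k)%N, {morph psi : x y / x + y}, psi 0 = 0,
      (forall w, psi w = 0 -> w = 0) & (forall z w, psi (w *m M z) = psi w * z)].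
Proof.
move=> k_gt0; have [L cardL] := ext_card F k_gt0.
have F_gt1 : (1 < #|F|)%N by apply: finNzRing_gt1.
have dL : \dim {:L} = k.
  apply: (expnI F_gt1); rewrite -cardL.
  have e1 := (@card_vspacef _ _ _ : #|{: finvect_type L}%VS| = _).
  have e2 := (@card_vspace _ _ _ {: finvect_type L}%VS).
  by rewrite -e1 e2.
subst k.
pose e := vbasis {:L}.
have freeE : free e := basis_free (vbasisP _).
pose psi (w : 'rV[F]_(\dim {:L})) : L := \sum_i w 0 i *: e`_i.
pose M (z : L) : 'M[F]_(\dim {:L}) := \matrix_(b, c) coord e c (e`_b * z).
have hM z w : psi (w *m M z) = psi w * z.
  rewrite /psi mulr_suml.
  under eq_bigr => c _ do rewrite mxE scaler_suml.
  rewrite exchange_big /=; apply: eq_bigr => b _.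
  under eq_bigr => c _ do rewrite mxE -scalerA.
  rewrite -scalerAl -scaler_sumr; congr (_ *: _).
  by rewrite -(coord_vbasis (memvf (e`_b * z))).
exists (FinFieldExtType L), psi, M; split => //.
- by move=> x y; rewrite /psi -big_split /=; apply: eq_bigr => i _; rewrite mxE scalerDl.
- by rewrite /psi big1 // => i _; rewrite mxE scale0r.
- move=> w w0; apply/rowP => i; rewrite mxE.
  by rewrite -(coord_sum_free (fun i => w 0 i) i freeE) -/(psi w) w0 linear0.
Qed.

Lemma sq_sub2 (K : fieldType) (h2 : 2%:R = 0 :> K) (x y : K) :
  x ^+ 2 - y ^+ 2 = (x - y) ^+ 2.
Proof.
have e : y ^+ 2 + y ^+ 2 = 0 by rewrite -mulr2n -mulr_natr h2 mulr0.
have e2 : x * y *+ 2 = 0 by rewrite -mulr_natr h2 mulr0.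
rewrite sqrrB e2 subr0; congr (_ + _); apply/eqP; rewrite eq_sym -addr_eq0 addrC.
by rewrite e.
Qed.

Lemma det2 (K : fieldType) (h2 : 2%:R = 0 :> K) (c0 c1 : K) m0 m1 :
  c0 != 0 -> c1 != 0 -> c0 != c1 -> (m0 < 3)%N -> (m1 < 3)%N -> m0 != m1 ->
  c0 ^+ m0 * c1 ^+ m1 - c1 ^+ m0 * c0 ^+ m1 != 0.
Proof.
move=> n0 n1 n01.
have d01 : c0 - c1 != 0 by rewrite subr_eq0.
have d10 : c1 - c0 != 0 by rewrite subr_eq0 eq_sym.
case: m0 m1 => [|[|[|m0]]] [|[|[|m1]]] //= _ _ _.
- by rewrite (_ : _ - _ = c1 - c0) //; ring.
- by rewrite (_ : _ - _ = c1 ^+ 2 - c0 ^+ 2); [rewrite (sq_sub2 h2) expf_neq0|ring].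
- by rewrite (_ : _ - _ = c0 - c1) //; ring.
- by rewrite (_ : _ - _ = c0 * c1 * (c1 - c0)) ?mulf_neq0 //; ring.
- by rewrite (_ : _ - _ = c0 ^+ 2 - c1 ^+ 2); [rewrite (sq_sub2 h2) expf_neq0|ring].
- by rewrite (_ : _ - _ = c0 * c1 * (c0 - c1)) ?mulf_neq0 //; ring.
Qed.

Lemma SR_even (K : finFieldType) (h2 : 2%:R = 0 :> K) u :
  (u <= #|K|.-1)%N -> exists a : 'I_3 -> 'I_u -> K, SR a.
Proof.
move=> hu.
pose nz := enum (predC1 (0 : K)).
have snz : size nz = #|K|.-1 by rewrite -cardE cardC1.
have unz : uniq nz := enum_uniq _.
pose ys (k : 'I_u) := nth 0 nz k.
have ys_nz k : ys k != 0.
  have : ys k \in nz by apply: mem_nth; rewrite snz; apply: leq_trans (ltn_ord k) hu.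
  by rewrite mem_enum.
have ys_inj : injective ys.
  move=> k k' /eqP; rewrite /ys nth_uniq ?snz //.
  1: by move/eqP/ord_inj.
  1-2: by apply: leq_trans (ltn_ord _) hu.
exists (fun i k => ys k ^+ i); apply: SR_of_ker => n f g injf injg v hv.
have hn : (n <= 3)%N by have := leq_card f injf; rewrite !card_ord.
case: n => [|[|[|[|n]]]] in f g injf injg v hv hn *.
- by case.
- move=> x; have := hv x; rewrite big_ord1 (ord1 x) => /eqP.
  by rewrite mulf_eq0 expf_eq0 (negbTE (ys_nz _)) andbF orbF => /eqP.
- pose x0 : 'I_2 := ord0; pose x1 : 'I_2 := lift ord0 ord0.
  have E y : v x0 * ys (g y) ^+ f x0 + v x1 * ys (g y) ^+ f x1 = 0.
    by have := hv y; rewrite big_ord_recl big_ord1.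
  have neq : ys (g x0) != ys (g x1) by apply/eqP => /ys_inj /injg.
  have fneq : (f x0 : nat) != f x1 by apply/eqP => /ord_inj /injf.
  have Dn := det2 h2 (ys_nz (g x0)) (ys_nz (g x1)) neq (ltn_ord (f x0)) (ltn_ord (f x1)) fneq.
  set c0 := ys (g x0) in E Dn; set c1 := ys (g x1) in E Dn.
  have E0 := E x0; have E1 := E x1; rewrite -/c0 in E0; rewrite -/c1 in E1.
  move: E0 E1 Dn; set a00 := c0 ^+ f x0; set a01 := c0 ^+ f x1.
  set a10 := c1 ^+ f x0; set a11 := c1 ^+ f x1 => E0 E1 Dn.
  have V0 : v x0 * (a00 * a11 - a10 * a01) = 0.
    rewrite (_ : v x0 * (a00 * a11 - a10 * a01) = a11 * (v x0 * a00 + v x1 * a01)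
       - a01 * (v x0 * a10 + v x1 * a11)); last ring.
    by rewrite E0 E1 !mulr0 subrr.
  have V1 : v x1 * (a00 * a11 - a10 * a01) = 0.
    rewrite (_ : v x1 * (a00 * a11 - a10 * a01) = a00 * (v x0 * a10 + v x1 * a11)
       - a10 * (v x0 * a00 + v x1 * a01)); last ring.
    by rewrite E0 E1 !mulr0 subrr.
  move: V0 V1 => /eqP; rewrite mulf_eq0 (negbTE Dn) orbF => /eqP V0.
  move=> /eqP; rewrite mulf_eq0 (negbTE Dn) orbF => /eqP V1.
  case=> [[|[|m]]] hm //.
  + by rewrite (_ : Ordinal hm = x0) //; apply: val_inj.
  + by rewrite (_ : Ordinal hm = x1) //; apply: val_inj.
- pose P := \sum_x v x *: ('X^(f x) : {poly K}).
  have P0 : P = 0.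
    apply: (@poly_zero_of_roots _ 3 _ (ys \o g)); first exact: inj_comp.
    - rewrite /P; apply: (big_ind (fun p : {poly K} => size p <= 3)%N) => //.
      + by rewrite size_poly0.
      + by move=> p q hp hq; apply: leq_trans (size_polyD _ _) _; rewrite geq_max hp.
      + by move=> x _; apply: leq_trans (size_scale_leq _ _) _; rewrite size_polyXn.
    - move=> y; rewrite /P horner_sum /=; apply: etrans (hv y); apply: eq_bigr => x _.
      by rewrite hornerZ hornerXn.
  move=> x0; have := congr1 (fun p : {poly K} => p`_(f x0)) P0.
  rewrite /P coef0 coef_sum (bigD1 x0) //= big1 ?addr0.
    by rewrite coefZ coefXn eqxx mulr1.
  move=> x hx; rewrite coefZ coefXn; case: eqP => [/ord_inj/injf e|]; last by rewrite mulr0.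
  by move: hx; rewrite e eqxx.
- by [].
Qed.

Lemma char2_even (K : finFieldType) : ~~ odd #|K| -> 2%:R = 0 :> K.
Proof.
move=> hev; have [p pr_p pcharKp] := finPcharP K.
have := card_pprimeChar pcharKp => cK.
case: (even_prime pr_p) => [p2|op]; first by rewrite -p2 (pcharf0 pcharKp).
by move: hev; rewrite cK oddX op orbT.
Qed.

Local Close Scope ring_scope.

Theorem mainTheorem14 (F : finFieldType) (s d t j : nat) :
  0 < s -> 0 < d -> 0 < t -> d * t < s -> 0 < j ->
  (if odd (#|F| ^ j) || (s - d * t \notin [:: 3; #|F| ^ j - 1])
   then s - 1 <= #|F| ^ j
   else s - 2 <= #|F| ^ j) ->
  exists A : block_array F (s - d * t) (d * t) j,
    blocks_in_GL A /\ block_totally_nonsingular A.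
Proof.
move=> s_gt0 d_gt0 t_gt0 hdt j_gt0 hcond.
have [K [psi [M [cardK psiD psi0 psi_inj hM]]]] := ext_field F j_gt0.
rewrite -cardK in hcond.
have u_gt0 : (0 < d * t)%N by rewrite muln_gt0 d_gt0.
have r_gt0 : (0 < s - d * t)%N by rewrite subn_gt0.
have [a ha] : exists a : 'I_(s - d * t) -> 'I_(d * t) -> K, SR a.
  case: ifP hcond => hc hs.
    by apply: SR_gen => //; lia.
  move: hc => /negbT /norP [hev]; rewrite negbK !inE => /orP[/eqP r3|/eqP rQ].
    have [a3 h3] := @SR_even K (char2_even hev) (d * t) ltac:(lia).
    exists (fun i k => a3 (cast_ord r3 i) k).
    exact: (SR_restr (h1 := cast_ord r3) (h2 := id) (@cast_ord_inj _ _ r3) (@inj_id _) h3).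
  have [a3 h3] := @SR_even K (char2_even hev) (s - d * t) ltac:(lia).
  have hu3 : (d * t <= 3)%N by lia.
  exists (fun i k => a3 (widen_ord hu3 k) i).
  have wi : injective (widen_ord hu3) by move=> x y /(congr1 val) /= /ord_inj.
  have := SR_restr (@inj_id _) wi (SR_tr h3); exact.
exists (fun i k => M (a i k)); split.
  move=> i k; apply: unit_of_ker => w hw; apply: psi_inj.
  have := hM (a i k) w; rewrite hw psi0 => /esym /eqP.
  by rewrite mulf_eq0 (negbTE (SR_nz _ _ ha)) orbF => /eqP.
exact: (block_TN psiD psi0 psi_inj (fun i k w => hM (a i k) w) ha).
Qed.
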